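(* Let $\mathcal C\subseteq\{0,1\}^n$ and $\mathcal D\subseteq\{0,1\}^m$ be neural codes, $\phi:R_\mathcal D\to R_\mathcal C$ a ring homomorphism, and $\tau:R[m]\to R[n]$ a ring homomorphism. Then $\tau$ is compatible with $\phi$ if and only if $q_\phi=q_\tau|_\mathcal C$, where $q_\tau:\{0,1\}^n\to\{0,1\}^m$ and $q_\phi:\mathcal C\to\mathcal D$ are the associated code maps.
   Context: For a code $\mathcal C\subseteq\{0,1\}^n$, $R_\mathcal C$ is the ring of all functions $\mathcal C\to\mathbb F_2$ (equivalently $\mathbb F_2[x_1,\dots,x_n]$ modulo the ideal of polynomials vanishing on $\mathcal C$); $R[n]=R_{\{0,1\}^n}$. $R_\mathcal C$ is an $R[n]$-module via $(r\cdot f)(c)=r(c)f(c)$. $\rho_d$ denotes the indicator function of $\{d\}$. For any ring homomorphism $\psi:R_\mathcal B\to R_\mathcal A$ between neural rings and any $a\in\mathcal A$ there is a unique $b\in\mathcal B$ with $\psi(\rho_b)(a)=1$; the associated code map $q_\psi:\mathcal A\to\mathcal B$ sends $a$ to this $b$ (this applies in particular to $\tau:R[m]\to R[n]$ with $\mathcal A=\{0,1\}^n$, $\mathcal B=\{0,1\}^m$). A ring homomorphism $\tau:R[m]\to R[n]$ is compatible with $\phi$ if $\phi(r\cdot f)=\tau(r)\cdot\phi(f)$ for all $r\in R[m]$ and $f\in R_\mathcal D$. *)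

(* Defs.v *)
From mathcomp Require Import all_boot all_algebra.
Set Implicit Arguments. Unset Strict Implicit. Unset Printing Implicit Defensive.
Import GRing.Theory.
Local Open Scope ring_scope.

Definition word (n : nat) := {ffun 'I_n -> bool}.

Definition codeT (n : nat) (C : {set word n}) := {x : word n | x \in C}.

Definition RC (n : nat) (C : {set word n}) := {ffun codeT C -> 'F_2}.

Definition Rn (n : nat) := {ffun word n -> 'F_2}.

Definition rho (B : finType) (d : B) : {ffun B -> 'F_2} :=
  [ffun x => if x == d then 1 else 0].

(* Code map q_psi of a ring homomorphism psi : F_2^B -> F_2^A:
   q_psi a = the (unique) b with psi(rho_b)(a) = 1.
   Returned as an option (Some b); it is always Some for ring homs. *)
Definition codemap (A B : finType)
  (psi : {ffun B -> 'F_2} -> {ffun A -> 'F_2}) (a : A) : option B :=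
  [pick b | psi (rho b) a == 1].

Definition act (n : nat) (C : {set word n}) (r : Rn n) (f : RC C) : RC C :=
  [ffun c => r (val c) * f c].

Definition compatible (n m : nat) (C : {set word n}) (D : {set word m})
  (phi : RC D -> RC C) (tau : Rn m -> Rn n) : Prop :=
  forall (r : Rn m) (f : RC D), phi (act r f) = act (tau r) (phi f).

(* Main.v *)
Require Import Defs.
From mathcomp Require Import all_boot all_algebra.
Import GRing.Theory.
Local Open Scope ring_scope.

Lemma F2_cases (x : 'F_2) : x = 0 \/ x = 1.
Proof. case: x => -[|[|k]] Hk; [left|right|]; try exact: val_inj. by []. Qed.

Lemma F2_10 : (1 : 'F_2) != 0.
Proof. by []. Qed.

Lemma eval_ex (A B : finType)
  (psi : {rmorphism {ffun B -> 'F_2} -> {ffun A -> 'F_2}}) (a : A) :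
  exists b, (forall f, psi f a = f b) /\ codemap psi a = Some b.
Proof.
have hsum : \sum_b rho b = 1 :> {ffun B -> 'F_2}.
  apply/ffunP => x; rewrite sum_ffunE !ffunE (bigD1 x) //= big1 ?addr0.
    by rewrite /rho ffunE eqxx.
  by move=> y /negbTE hy; rewrite /rho ffunE eq_sym hy.
have [b hb] : exists b, psi (rho b) a = 1.
  case: (pickP (fun b => psi (rho b) a == 1)) => [b /eqP hb|hall]; first by exists b.
  have : psi 1 a = 0.
    rewrite -hsum rmorph_sum sum_ffunE big1 // => y _.
    by have := hall y; case: (F2_cases (psi (rho y) a)) => ->.
  by rewrite rmorph1 ffunE => /eqP; rewrite (negbTE F2_10).
have hf : forall f, psi f a = f b.
  move=> f.
  have hm : f * rho b = if f b == 1 then rho b else 0.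
    apply/ffunP => x; rewrite !ffunE /rho.
    case: eqP => [->|/eqP/negbTE hxb]; case: (F2_cases (f b)) => ->;
      by rewrite ?eqxx ?ffunE /= ?eqxx ?hxb ?mulr1 ?mulr0.
  have e : psi (f * rho b) = psi f * psi (rho b) by rewrite rmorphM.
  have := congr1 (fun g : {ffun A -> 'F_2} => g a) e.
  rewrite hm ffunE hb mulr1 => <-.
  by case: (F2_cases (f b)) => ->; rewrite ?eqxx ?rmorph0 ?ffunE.
exists b; split => //.
rewrite /codemap; case: pickP => [y|].
  rewrite hf /rho ffunE; by case: (b =P y) => [->|].
by move=> /(_ b); rewrite hb eqxx.
Qed.

Theorem corollary2 (n m : nat) (C : {set word n}) (D : {set word m})
  (phi : {rmorphism RC D -> RC C}) (tau : {rmorphism Rn m -> Rn n}) :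
  compatible phi tau <->
  (forall c : codeT C,
     omap val (codemap (A := codeT C) (B := codeT D) phi c)
     = codemap (A := word n) (B := word m) tau (val c)).
Proof.
split.
- move=> H c.
  have [bc [hc ->]] := @eval_ex _ _ phi c.
  have [bt [ht ->]] := @eval_ex _ _ tau (val c).
  have := congr1 (fun g : RC C => g c) (H (rho (val bc)) 1).
  rewrite /act !ffunE hc ht rmorph1 /RC.
  rewrite (ffunE (fun c0 : codeT D => _)) /rho !ffunE eqxx !mulr1.
  by case: (bt =P val bc) => [->|].
- move=> H r f; apply/ffunP => c.
  have [bc [hc hc']] := @eval_ex _ _ phi c.
  have [bt [ht ht']] := @eval_ex _ _ tau (val c).
  have := H c; rewrite hc' ht' /= => -[e].
  rewrite hc /act /RC (ffunE (fun c0 : codeT D => _)) (ffunE (fun c0 : codeT C => _)).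
  by rewrite ht hc -e.
Qed.
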